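(* Let $S$ be a finitely generated submonoid of $\mathbb N^d$ that has a Frobenius element $\mathbf f$ and is irreducible. Then either $\mathrm{PF}(S)=\{\mathbf f\}$ or $\mathrm{PF}(S)=\{\mathbf f,\mathbf f/2\}$.
   Context: $\mathrm{pos}(S)$ is the rational cone generated by $S$ (nonnegative rational combinations of its generators), $\mathcal H(S)=(\mathrm{pos}(S)\setminus S)\cap\mathbb N^d$, and $\mathrm{PF}(S)=\{\mathbf a\in\mathcal H(S):\mathbf a+(S\setminus\{0\})\subseteq S\}$. A term order on $\mathbb N^d$ is a total order compatible with addition with $0$ least; $\mathbf f\in\mathcal H(S)$ is a Frobenius element if $\mathbf f=\max_\prec\mathcal H(S)$ for some term order $\prec$. $S$ is irreducible if it cannot be expressed as the intersection of two submonoids of $\mathbb N^d$ each containing it properly. *)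

(* Defs.v *)
From mathcomp Require Import all_boot all_order all_algebra.
Set Implicit Arguments. Unset Strict Implicit. Unset Printing Implicit Defensive.
Import Order.TTheory GRing.Theory Num.Theory.

Definition vec (d : nat) := {ffun 'I_d -> nat}.
Definition vzero (d : nat) : vec d := [ffun => 0%N].
Definition vadd (d : nat) (a b : vec d) : vec d := [ffun i => (a i + b i)%N].

Definition submonoid (d : nat) (S : vec d -> Prop) : Prop :=
  S (vzero d) /\ forall a b, S a -> S b -> S (vadd a b).

Definition fin_gen (d : nat) (S : vec d -> Prop) : Prop :=
  exists (n : nat) (g : 'I_n -> vec d),
    forall x, S x <-> exists c : 'I_n -> nat,
      forall j, x j = (\sum_(i < n) c i * g i j)%N.

Definition in_pos (d : nat) (S : vec d -> Prop) (x : vec d) : Prop :=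
  exists (n : nat) (s : 'I_n -> vec d) (q : 'I_n -> rat),
    (forall i, S (s i)) /\ (forall i, 0 <= q i)%R /\
    forall j, ((x j)%:R = \sum_(i < n) q i * (s i j)%:R)%R.

Definition holes (d : nat) (S : vec d -> Prop) (x : vec d) : Prop :=
  in_pos S x /\ ~ S x.

Definition PF (d : nat) (S : vec d -> Prop) (a : vec d) : Prop :=
  holes S a /\ forall s, S s -> s <> vzero d -> S (vadd a s).

(* Term order (given as its reflexive version "le"): total order on N^d,
   compatible with addition, with 0 least. *)
Definition term_order (d : nat) (le : vec d -> vec d -> Prop) : Prop :=
  (forall a, le a a) /\
  (forall a b, le a b -> le b a -> a = b) /\
  (forall a b c, le a b -> le b c -> le a c) /\
  (forall a b, le a b \/ le b a) /\
  (forall a b c, le a b -> le (vadd a c) (vadd b c)) /\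
  (forall a, le (vzero d) a).

Definition frobenius_elt (d : nat) (S : vec d -> Prop) (f : vec d) : Prop :=
  exists le, term_order le /\ holes S f /\ forall h, holes S h -> le h f.

Definition irreducible_monoid (d : nat) (S : vec d -> Prop) : Prop :=
  forall T1 T2 : vec d -> Prop, submonoid T1 -> submonoid T2 ->
    (forall x, S x <-> T1 x /\ T2 x) ->
    (forall x, T1 x -> S x) \/ (forall x, T2 x -> S x).

(* Main.v *)
Require Import Defs.
From mathcomp Require Import all_boot all_order all_algebra.
From mathcomp Require Import zify.
From Stdlib Require Import Classical.
Import Order.TTheory GRing.Theory Num.Theory.
Set Implicit Arguments. Unset Strict Implicit. Unset Printing Implicit Defensive.

Definition vscale (d : nat) (k : nat) (x : vec d) : vec d := [ffun i => k * x i]%N.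

Lemma vec_ext d (a b : vec d) : (forall i, a i = b i) -> a = b.
Proof. by move=> H; apply/ffunP => i; rewrite H. Qed.

Lemma vadd0 d (x : vec d) : vadd (vzero d) x = x.
Proof. by apply: vec_ext => i; rewrite !ffunE. Qed.

Lemma vaddC d (x y : vec d) : vadd x y = vadd y x.
Proof. by apply: vec_ext => i; rewrite !ffunE addnC. Qed.

Lemma vadd_neq0 d (a s : vec d) : s <> vzero d -> vadd a s <> vzero d.
Proof.
move=> Hs E; apply: Hs; apply: vec_ext => i.
have := congr1 (fun v : vec d => v i) E; rewrite /= !ffunE; lia.
Qed.

Lemma vadd_cancel d (a c : vec d) : vadd a c = a -> c = vzero d.
Proof.
move=> E; apply: vec_ext => i.
have := congr1 (fun v : vec d => v i) E; rewrite /= !ffunE; lia.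
Qed.

Lemma vscale_neq0 d k (h : vec d) : (0 < k)%N -> h <> vzero d -> vscale k h <> vzero d.
Proof.
move=> Hk Hh E; apply: Hh; apply: vec_ext => i.
have := congr1 (fun v : vec d => v i) E; rewrite /= !ffunE; nia.
Qed.

Lemma in_pos0 d (S : vec d -> Prop) : in_pos S (vzero d).
Proof.
exists 0%N, (fun _ => vzero d), (fun _ => 0%R); split; [by case|split; [by case|]].
by move=> j; rewrite big_ord0 ffunE.
Qed.

Lemma in_posS d (S : vec d -> Prop) s : S s -> in_pos S s.
Proof.
move=> Hs; exists 1%N, (fun _ => s), (fun _ => 1%R); split; [by []|split; [by []|]].
by move=> j; rewrite big_ord1 mul1r.
Qed.

Lemma in_posD d (S : vec d -> Prop) x y : in_pos S x -> in_pos S y -> in_pos S (vadd x y).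
Proof.
move=> [n1 [s1 [q1 [H1 [H1' H1'']]]]] [n2 [s2 [q2 [H2 [H2' H2'']]]]].
exists (n1 + n2)%N,
  (fun i => match split i with inl a => s1 a | inr b => s2 b end),
  (fun i => match split i with inl a => q1 a | inr b => q2 b end).
split; [by move=> i; case: (split i)|split; [by move=> i; case: (split i)|]].
move=> j; rewrite big_split_ord ffunE natrD H1'' H2''.
congr (_ + _)%R; apply: eq_bigr => i _.
- by have := @unsplitK n1 n2 (inl i); rewrite /= => ->.
- by have := @unsplitK n1 n2 (inr i); rewrite /= => ->.
Qed.

Lemma in_posZ d (S : vec d -> Prop) x k : in_pos S x -> in_pos S (vscale k x).
Proof.
move=> Hx; elim: k => [|k IH].
  have -> : vscale 0 x = vzero d by apply: vec_ext => i; rewrite !ffunE.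
  exact: in_pos0.
have -> : vscale k.+1 x = vadd x (vscale k x).
  by apply: vec_ext => i; rewrite !ffunE mulSn.
exact: in_posD.
Qed.

Section Main.
Variables (d : nat) (S : vec d -> Prop) (f : vec d) (le : vec d -> vec d -> Prop).
Hypothesis Smon : submonoid S.
Hypothesis TO : term_order le.
Hypothesis Hf : holes S f.
Hypothesis Hmax : forall h, holes S h -> le h f.
Hypothesis Irr : irreducible_monoid S.

Lemma hole_above c : c <> vzero d -> ~ holes S (vadd f c).
Proof.
move=> Hc Hh.
case: TO => _ [anti [_ [_ [comp zero]]]].
have l1 := Hmax Hh.
have l2 : le f (vadd f c).
  by have := comp _ _ f (zero c); rewrite vadd0 vaddC.
by apply: Hc; apply: (@vadd_cancel d f); apply: anti.
Qed.

Lemma S0 : S (vzero d). Proof. by case: Smon. Qed.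

Lemma f_neq0 : f <> vzero d.
Proof. by move=> E; case: Hf => _; rewrite E; case: Smon. Qed.

Lemma PF_f : PF S f.
Proof.
split => // s Hs Hs0.
apply: NNPP => N; apply: (hole_above Hs0); split => //.
by apply: in_posD; [case: Hf|apply: in_posS].
Qed.

Lemma S_ff : S (vadd f f).
Proof.
apply: NNPP => N; apply: (hole_above f_neq0); split => //.
by case: Hf => Hp _; apply: in_posD.
Qed.

Lemma T1_mon : submonoid (fun x => S x \/ x = f).
Proof.
split; first by left; case: Smon.
case: Smon => _ Sadd.
have PFf := PF_f.
move=> a b [Ha|->] [Hb|->].
- by left; apply: Sadd.
- case: (classic (a = vzero d)) => [->|Ha0]; first by right; rewrite vadd0.
  by left; rewrite vaddC; apply: PFf.2.
- case: (classic (b = vzero d)) => [->|Hb0]; first by right; rewrite vaddC vadd0.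
  by left; apply: PFf.2.
- by left; apply: S_ff.
Qed.

Lemma key h : PF S h -> h <> f -> vadd h h = f.
Proof.
move=> [[Hhp HhS] HPF] Hhf.
case: Smon => S0' Sadd.
have Hh0 : h <> vzero d by move=> E; apply: HhS; rewrite E.
have A : forall j s, S s -> s <> vzero d -> S (vadd (vscale j h) s).
  elim=> [|j IH] s Hs Hs0.
    by have -> : vadd (vscale 0 h) s = s by apply: vec_ext => i; rewrite !ffunE.
  have -> : vadd (vscale j.+1 h) s = vadd h (vadd (vscale j h) s).
    by apply: vec_ext => i; rewrite !ffunE mulSn addnA.
  by apply: HPF; [apply: IH|apply: vadd_neq0].
have fS : ~ S f by case: Hf.
have T2mon : submonoid (fun x => S x \/ exists k, (0 < k)%N /\ x = vscale k h).
  split; first by left.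
  have M : forall a k, S a -> (0 < k)%N -> S (vadd a (vscale k h)) \/
         exists k', (0 < k')%N /\ vadd a (vscale k h) = vscale k' h.
    move=> a k Ha Hk; case: (classic (a = vzero d)) => [->|Ha0].
      by right; exists k; rewrite vadd0.
    by left; rewrite vaddC; apply: A.
  move=> a b [Ha|[k [Hk ->]]] [Hb|[k' [Hk' ->]]].
  - by left; apply: Sadd.
  - exact: M.
  - by rewrite vaddC; apply: M.
  - right; exists (k + k')%N; split; first lia.
    by apply: vec_ext => i; rewrite !ffunE mulnDl.
have [k [Hk Ef]] : exists k, (0 < k)%N /\ f = vscale k h.
  apply: NNPP => N.
  have := Irr T1_mon T2mon.
  case.
  - move=> x; split; first by move=> Hx; split; left.
    move=> [[Hx|Ex] [Hx'|[k [Hk Ex']]]] //.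
    by exfalso; apply: N; exists k; rewrite -Ex.
  - by move=> H; apply: fS; apply: H; right.
  - move=> H; apply: HhS; apply: H; right; exists 1%N; split => //.
    by apply: vec_ext => i; rewrite !ffunE mul1n.
have Hk1 : k <> 1%N.
  move=> E; apply: Hhf; rewrite Ef E; apply: vec_ext => i; rewrite !ffunE; lia.
case: (ltnP k 3) => Hk3.
  rewrite Ef; have -> : k = 2%N by lia.
  by apply: vec_ext => i; rewrite !ffunE; lia.
exfalso.
have Sk1 : S (vscale k.+1 h).
  apply: NNPP => N; apply: (hole_above Hh0); split.
    have -> : vadd f h = vscale k.+1 h.
      by rewrite Ef; apply: vec_ext => i; rewrite !ffunE mulSn addnC.
    by apply: in_posZ.
  have -> : vadd f h = vscale k.+1 h.
    by rewrite Ef; apply: vec_ext => i; rewrite !ffunE mulSn addnC.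
  done.
have Skm1 : ~ S (vscale k.-1 h).
  move=> H; apply: fS.
  have -> : f = vadd h (vscale k.-1 h).
    by rewrite Ef; apply: vec_ext => i; rewrite !ffunE; nia.
  by apply: HPF => //; apply: vscale_neq0 => //; lia.
have T3mon : submonoid (fun x => S x \/ x = vscale k.-1 h).
  split; first by left.
  have M : forall a, S a -> S (vadd a (vscale k.-1 h)) \/
         vadd a (vscale k.-1 h) = vscale k.-1 h.
    move=> a Ha; case: (classic (a = vzero d)) => [->|Ha0].
      by right; rewrite vadd0.
    by left; rewrite vaddC; apply: A.
  move=> a b [Ha|->] [Hb|->].
  - by left; apply: Sadd.
  - exact: M.
  - by rewrite vaddC; apply: M.
  - left.
    have -> : vadd (vscale k.-1 h) (vscale k.-1 h) = vadd (vscale (k - 3) h) (vscale k.+1 h).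
      by apply: vec_ext => i; rewrite !ffunE; nia.
    apply: A => //; apply: vscale_neq0 => //.
have := Irr T1_mon T3mon.
case.
- move=> x; split; first by move=> Hx; split; left.
  move=> [[Hx|Ex] [Hx'|Ex']] //.
  exfalso; apply: Hh0; apply: vec_ext => i.
  have := congr1 (fun v : vec d => v i) (etrans (esym Ex) Ex').
  rewrite Ef /= !ffunE; nia.
- by move=> H; apply: fS; apply: H; right.
- by move=> H; apply: Skm1; apply: H; right.
Qed.

End Main.

Theorem theorem4p3 (d : nat) (S : vec d -> Prop) (f : vec d) :
  submonoid S -> fin_gen S -> frobenius_elt S f -> irreducible_monoid S ->
  (forall a, PF S a <-> a = f) \/
  (exists g : vec d, vadd g g = f /\ forall a, PF S a <-> a = f \/ a = g).
Proof.
move=> Smon _ [le [TO [Hf Hmax]]] Irr.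
have PFf := PF_f TO Hf Hmax.
case: (classic (exists h, PF S h /\ h <> f)) => [[h [Hh Hhf]]|N].
- have Eh := key Smon TO Hf Hmax Irr Hh Hhf.
  right; exists h; split => // a; split.
  + move=> Ha; case: (classic (a = f)) => [->|Haf]; first by left.
    right; have Ea := key Smon TO Hf Hmax Irr Ha Haf.
    apply: vec_ext => i.
    have := congr1 (fun v : vec d => v i) (etrans Ea (esym Eh)).
    rewrite /= !ffunE; lia.
  + by case=> ->.
- left => a; split; last by move=> ->.
  move=> Ha; apply: NNPP => Haf; apply: N; by exists a.
Qed.
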